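(* In the dense network described in the context, for every arbitrarily small constant $\epsilon_1>0$, with high probability the minimum distance between any two nodes, and between any node and any antenna on a base-station boundary, is larger than $1/n^{1+\epsilon_1}$.
   Context: Dense network: a square of area $1$ partitioned into $m=n^{\beta}$ equal square cells ($\beta\in[0,1)$), each with a base station (BS) at its center occupying a disk of radius $\epsilon_0/\sqrt{m}$ ($\epsilon_0>0$ an arbitrarily small constant independent of $n$). Each BS has $l=n^{\gamma}$ antennas ($\gamma\in[0,1)$, $\beta+\gamma\le 1$, so $ml=O(n)$); antennas on the BS boundary are regularly spaced on the boundary circle (all $l$ of them if $l=O(\sqrt{n/m})$, otherwise $\sqrt{n/m}$ of them with the rest inside). $n$ nodes are placed independently and uniformly at random in the square minus the BS disks. ''With high probability'' means with probability tending to $1$ as $n\to\infty$. *)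

(* Defs.v *)
From HB Require Import structures.
From mathcomp Require Import all_boot all_order all_algebra.
From mathcomp Require Import all_classical all_reals all_analysis.
Set Implicit Arguments. Unset Strict Implicit. Unset Printing Implicit Defensive.
Import Order.TTheory GRing.Theory Num.Theory.
Import numFieldNormedType.Exports.
Local Open Scope classical_set_scope.
Local Open Scope ring_scope.

Definition dist2 {R : realType} (p q : R * R) : R :=
  Num.sqrt ((p.1 - q.1) ^+ 2 + (p.2 - q.2) ^+ 2).

(** Number of cells per side: k = floor (n^(beta/2)) (at least 1), so that
    the number of cells is m = k^2 (~ n^beta). *)
Definition cells_side {R : realType} (beta : R) (n : nat) : nat :=
  maxn 1 (Num.trunc ((n%:R : R) `^ (beta / 2))).

Definition n_ant {R : realType} (gamma : R) (n : nat) : nat :=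
  Num.trunc ((n%:R : R) `^ gamma).

(** Number of antennas on the boundary circle of one BS:
    all l of them if l = O(sqrt(n/m)) (i.e. gamma <= (1-beta)/2),
    otherwise floor(sqrt(n/m)). *)
Definition n_bdry {R : realType} (beta gamma : R) (n : nat) : nat :=
  if gamma <= (1 - beta) / 2 then n_ant gamma n
  else Num.trunc (Num.sqrt ((n%:R : R) / ((cells_side beta n)%:R ^+ 2))).

Definition bs_center {R : realType} (k a b : nat) : R * R :=
  (((a%:R + 2^-1) / k%:R), ((b%:R + 2^-1) / k%:R)).

(** Radius of the BS disk: eps0 / sqrt m = eps0 / k. *)
Definition bs_radius {R : realType} (eps0 : R) (k : nat) : R := eps0 / k%:R.

Definition node_region {R : realType} (beta eps0 : R) (n : nat) : set (R * R) :=
  let k := cells_side beta n in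
  [set p | 0 <= p.1 <= 1 /\ 0 <= p.2 <= 1 /\
     forall a b : nat, (a < k)%N -> (b < k)%N ->
       bs_radius eps0 k < dist2 p (bs_center k a b)].

Definition bdry_antenna {R : realType} (beta eps0 theta : R) (n a b j : nat)
  (gamma : R) : R * R :=
  let k := cells_side beta n in
  let c := bs_center k a b in
  let phi := theta + 2 * pi * j%:R / (n_bdry beta gamma n)%:R in
  (c.1 + bs_radius eps0 k * cos phi, c.2 + bs_radius eps0 k * sin phi).

Definition leb2 {R : realType} := ((@lebesgue_measure R) \x (@lebesgue_measure R))%E.

Definition uniform_on {d : measure_display} {T : measurableType d} {R : realType}
  (P : probability T R) (X : T -> R * R) (D : set (R * R)) : Prop :=
  forall A : set (R * R), measurable A ->
    P (X @^-1` A) = ((fine (leb2 (A `&` D)) / fine (leb2 D)))%:E.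

Definition mutually_independent {d : measure_display} {T : measurableType d}
  {R : realType} (n : nat) (P : probability T R) (X : 'I_n -> T -> R * R) : Prop :=
  forall (S : {set 'I_n}) (A : 'I_n -> set (R * R)),
    (forall i, measurable (A i)) ->
    fine (P [set w | forall i, i \in S -> A i (X i w)]) =
    \prod_(i in S) fine (P (X i @^-1` A i)).

(* Main.v *)
Require Import Defs.
From HB Require Import structures.
From mathcomp Require Import all_boot all_order all_algebra.
From mathcomp Require Import all_classical all_reals all_analysis.
From mathcomp Require Import ring lra.
Import Order.TTheory GRing.Theory Num.Theory.
Import numFieldNormedType.Exports.
Local Open Scope classical_set_scope.
Local Open Scope ring_scope.

Lemma mpre d1 d2 (T : measurableType d1) (U : measurableType d2) (f : T -> U)
  (mf : measurable_fun setT f) (Y : set U) : measurable Y -> measurable (f @^-1` Y).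
Proof. by move=> mY; rewrite -[f @^-1` Y]setTI; apply: mf. Qed.

Section Geo.
Variable R : realType.
Implicit Types x y s r : R.
Implicit Types p q : R * R.

Definition box x y s : set (R * R) := `[x, x + s] `*` `[y, y + s].

Lemma box_meas x y s : measurable (box x y s).
Proof. by apply: measurableX; apply: measurable_itv. Qed.

Lemma leb2_box x y s : 0 <= s -> leb2 (box x y s) = (s * s)%:E.
Proof.
move=> s0; rewrite /leb2 /box product_measure1E; last 2 first.
- exact: measurable_itv.
- exact: measurable_itv.
have := lebesgue_measure_itv (R:=R) `[x, x + s]%R.
have := lebesgue_measure_itv (R:=R) `[y, y + s]%R.
move=> /= -> /= ->.
rewrite /= !lte_fin.
have [->|sp] := eqVneq s 0.
  by rewrite !addr0 ltxx mulr0; apply: mul0e.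
have sp' : 0 < s by rewrite lt0r sp.
by rewrite !ltrDl sp' -!EFinD -!EFinM !(addrC x) !(addrC y) !addrK.
Qed.

Lemma dist2_ge0 p q : 0 <= dist2 p q. Proof. exact: sqrtr_ge0. Qed.

Lemma abs_le_dist1 p q : `|p.1 - q.1| <= dist2 p q.
Proof. by rewrite /dist2 -sqrtr_sqr ler_sqrt ?addr_ge0 ?sqr_ge0 // lerDl sqr_ge0. Qed.

Lemma abs_le_dist2 p q : `|p.2 - q.2| <= dist2 p q.
Proof. by rewrite /dist2 -sqrtr_sqr ler_sqrt ?addr_ge0 ?sqr_ge0 // lerDr sqr_ge0. Qed.

Definition sqf q p : R := (p.1 - q.1) ^+ 2 + (p.2 - q.2) ^+ 2.

Lemma dist2_le p q r : 0 <= r -> (dist2 p q <= r) = (sqf q p <= r ^+ 2).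
Proof.
move=> r0; rewrite /dist2 /sqf -{1}(ger0_norm r0) -sqrtr_sqr ler_sqrt //.
exact: sqr_ge0.
Qed.

Lemma dist2_lt p q r : 0 <= r -> (r < dist2 p q) = (r ^+ 2 < sqf q p).
Proof. by move=> r0; rewrite ltNge dist2_le // -ltNge. Qed.

Lemma sqf_meas q : measurable_fun setT (sqf q).
Proof.
apply: measurable_realfun.measurable_funD.
  apply: measurable_realfun.measurable_funX.
  apply: measurable_realfun.measurable_funB; [exact: measurable_fst|exact: measurable_cst].
apply: measurable_realfun.measurable_funX.
apply: measurable_realfun.measurable_funB; [exact: measurable_snd|exact: measurable_cst].
Qed.

Lemma dist2_box p q r : dist2 p q <= r -> box (q.1 - r) (q.2 - r) (r + r) p.
Proof.
move=> h; have h1 := le_trans (abs_le_dist1 p q) h.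
have h2 := le_trans (abs_le_dist2 p q) h.
move: h1 h2; rewrite !ler_norml /box /= !in_itv /= => /andP[? ?] /andP[? ?].
by split; apply/andP; split; lra.
Qed.

End Geo.
Arguments box {R}.
Arguments sqf {R}.
Arguments box_meas {R}.
Arguments leb2_box {R}.
Arguments abs_le_dist1 {R}.
Arguments abs_le_dist2 {R}.

Section UB.
Context d (T : ringOfSetsType d) (R : realType) (mu : {content set T -> \bar R}).

Lemma ubound (I : Type) (s : seq I) (F : I -> set T) :
  (forall i, measurable (F i)) ->
  (mu (\big[setU/set0]_(i <- s) F i) <= \sum_(i <- s) mu (F i))%E.
Proof.
move=> mF; elim: s => [|a s IH]; first by rewrite !big_nil measure0.
rewrite !big_cons.
have mU : measurable (\big[setU/set0]_(i <- s) F i) by exact: bigsetU_measurable.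
apply: (le_trans (measureU2 mu (mF a) mU)).
exact: leeD2l.
Qed.

Lemma ubound_fin (I : finType) (F : I -> set T) (c : R) :
  (forall i, measurable (F i)) -> (forall i, (mu (F i) <= c%:E)%E) ->
  (mu (\big[setU/set0]_(i : I) F i) <= (#|I|%:R * c)%:E)%E.
Proof.
move=> mF hF; have h := @ubound _ (index_enum I) F mF; apply: (le_trans h).
apply: (@le_trans _ _ (\sum_(i : I) c%:E)%E); first by apply: lee_sum => i _.
by rewrite sumEFin sumr_const mulr_natl.
Qed.
End UB.

Lemma bigU_mem (T : Type) (I : eqType) (s : seq I) (F : I -> set T) x :
  (\big[setU/set0]_(i <- s) F i) x <-> exists2 i, i \in s & F i x.
Proof.
elim: s => [|a s IH]; first by rewrite big_nil; split => // -[].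
rewrite big_cons; split.
- case=> [h|/IH [i si Fi]]; first by exists a => //; rewrite inE eqxx.
  by exists i => //; rewrite inE si orbT.
- case=> i; rewrite inE => /orP[/eqP ->|si] Fi; first by left.
  by right; apply/IH; exists i.
Qed.

Lemma bigU_fin (T : Type) (I : finType) (F : I -> set T) x :
  (\big[setU/set0]_(i : I) F i) x <-> exists i, F i x.
Proof.
rewrite bigU_mem; split; first by case=> i _ ?; exists i.
by case=> i ?; exists i => //; rewrite mem_index_enum.
Qed.

Lemma ubound_leb2 (R : realType) (I : finType) (F : I -> set (R * R)) (c : R) :
  (forall i, measurable (F i)) -> (forall i, (leb2 (F i) <= c%:E)%E) ->
  (leb2 (\big[setU/set0]_(i : I) F i) <= (#|I|%:R * c)%:E)%E.
Proof. move=> mF hF; exact: ubound_fin. Qed.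

Section NR.
Variable R : realType.
Variables (beta eps0 : R) (n : nat).
Hypothesis heps0 : 0 < eps0 < 2^-1.

Let k := cells_side beta n.
Let rho := bs_radius eps0 k.

Lemma k_gt0 : (0 < k)%N.
Proof. by rewrite /k /cells_side leq_max. Qed.

Lemma rho_ge0 : 0 <= rho.
Proof. by rewrite /rho /bs_radius divr_ge0 //; case/andP: heps0 => /ltW. Qed.

Definition Gset (a b : nat) : set (R * R) :=
  if (a < k)%N && (b < k)%N then sqf (bs_center k a b) @^-1` `]rho ^+ 2, +oo[
  else setT.

Lemma nr_eq : node_region beta eps0 n =
  box 0 0 1 `&` \bigcap_a \bigcap_b Gset a b.
Proof.
apply/seteqP; split => p /=.
- move=> [h1 [h2 h3]]; split.
    by rewrite /box /= !in_itv /= !add0r h1 h2.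
  move=> a _ b _; rewrite /Gset; case: ifP => // /andP[ha hb] /=.
  by rewrite in_itv /= andbT -dist2_lt ?rho_ge0 //; apply: h3.
- rewrite /box /= !in_itv /= !add0r => -[[h1 h2] h3]; split => //; split => //.
  move=> a b ha hb; have := h3 a I b I; rewrite /Gset ha hb /= in_itv /= andbT.
  by rewrite -dist2_lt ?rho_ge0.
Qed.

Lemma nr_meas : measurable (node_region beta eps0 n).
Proof.
rewrite nr_eq; apply: measurableI; first exact: box_meas.
apply: bigcapT_measurable => a; apply: bigcapT_measurable => b.
rewrite /Gset; case: ifP => _ //.
by apply: mpre; [exact: sqf_meas | exact: measurable_itv].
Qed.

Lemma nr_sub : node_region beta eps0 n `<=` box 0 0 1.
Proof. by move=> p [h1 [h2 _]]; rewrite /box /= !in_itv /= !add0r h1 h2. Qed.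

Lemma nr_cover : box 0 0 1 `<=` node_region beta eps0 n `|`
  \big[setU/set0]_(ab : 'I_k * 'I_k)
     box ((bs_center k ab.1 ab.2).1 - rho) ((bs_center k ab.1 ab.2).2 - rho) (rho + rho).
Proof.
move=> p hp; have [hN|hN] := pselect (node_region beta eps0 n p); first by left.
right; apply/bigU_fin.
have : ~ (forall a b : nat, (a < k)%N -> (b < k)%N -> rho < dist2 p (bs_center k a b)).
  move=> h; apply: hN; move: hp; rewrite /box /= !in_itv /= !add0r => -[h1 h2].
  by split => //; split.
move=> /existsNP [a /existsNP [b /not_implyP [ha /not_implyP [hb /negP]]]].
rewrite -leNgt => hd.
by exists (Ordinal ha, Ordinal hb); apply: dist2_box.
Qed.

Definition cD : R := 1 - 4 * eps0 ^+ 2.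

Lemma cD_gt0 : 0 < cD.
Proof. case/andP: heps0 => h1 h2; rewrite /cD; nra. Qed.

Lemma leb2_box01 : leb2 (box (0:R) 0 1) = 1%:E.
Proof. by rewrite leb2_box // mulr1. Qed.

Lemma nr_fin : leb2 (node_region beta eps0 n) = (fine (leb2 (node_region beta eps0 n)))%:E.
Proof.
have h0 := measure_ge0 (@leb2 R) (node_region beta eps0 n).
have h1 : (leb2 (node_region beta eps0 n) <= 1%:E)%E.
  rewrite -leb2_box01; apply: le_measure; rewrite ?inE; [exact: nr_meas|exact: box_meas|exact: nr_sub].
by rewrite fineK // ge0_fin_numE // (le_lt_trans h1) // ltry.
Qed.

Lemma nr_lb : cD <= fine (leb2 (node_region beta eps0 n)).
Proof.
set m := fine _.
have hU : (leb2 (\big[setU/set0]_(ab : 'I_k * 'I_k)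
     box ((bs_center k ab.1 ab.2).1 - rho) ((bs_center k ab.1 ab.2).2 - rho) (rho + rho))
   <= (#|{: 'I_k * 'I_k}|%:R * ((rho + rho) * (rho + rho)))%:E)%E.
  apply: ubound_leb2 => ab; first exact: box_meas.
  by rewrite leb2_box // addr_ge0 // rho_ge0.
have hc : (1%:E <= m%:E + (#|{: 'I_k * 'I_k}|%:R * ((rho + rho) * (rho + rho)))%:E)%E.
  set U := \big[setU/set0]_(ab : 'I_k * 'I_k) _ in hU *.
  have mU : measurable U by apply: bigsetU_measurable => ab _; exact: box_meas.
  have h1 : (leb2 (box (0:R) 0 1) <= leb2 (node_region beta eps0 n `|` U))%E.
    apply: le_measure; rewrite ?inE; [exact: box_meas| |exact: nr_cover].
    by apply: measurableU; [exact: nr_meas|exact: mU].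
  have h2 : (leb2 (node_region beta eps0 n `|` U) <= leb2 (node_region beta eps0 n) + leb2 U)%E.
    by apply: measureU2; [exact: nr_meas|exact: mU].
  rewrite -leb2_box01; apply: (le_trans h1); apply: (le_trans h2).
  rewrite nr_fin; exact: leeD2l.
move: hc; rewrite -EFinD lee_fin card_prod card_ord natrM.
have kn0 : (k%:R : R) != 0 by rewrite pnatr_eq0 -lt0n k_gt0.
have -> : (k%:R * k%:R * ((rho + rho) * (rho + rho))) = 4 * eps0 ^+ 2.
  by rewrite /rho /bs_radius; field.
by rewrite /cD; lra.
Qed.

End NR.

Lemma count_bound (R : realType) (beta gamma : R) (n : nat) :
  0 <= beta -> beta <= 1 -> 0 <= gamma -> beta + gamma <= 1 -> (0 < n)%N ->
  (cells_side beta n * cells_side beta n * n_bdry beta gamma n <= n)%N.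
Proof.
move=> b0 b1 g0 bg n0.
set N : R := n%:R.
have N1 : 1 <= N by rewrite /N ler1n.
have N0 : 0 <= N by apply: le_trans N1.
have pge1 : forall a : R, 0 <= a -> 1 <= N `^ a.
  by move=> a a0; rewrite -(powRr0 N); apply: ler_powR.
have pmono : forall a b : R, a <= b -> N `^ a <= N `^ b by move=> a b ab; apply: ler_powR.
set k := cells_side beta n.
have kR : (k%:R : R) <= N `^ (beta / 2).
  rewrite /k /cells_side; have h1 := pge1 (beta / 2) (divr_ge0 b0 (ler0n _ 2)).
  have : (1 <= Num.trunc (N `^ (beta / 2)))%N by rewrite truncn_ge_nat ?powR_ge0.
  by move/maxn_idPr => ->; rewrite truncn_le powR_ge0.
have k0 : (0 : R) <= k%:R by [].
have kk : (k%:R : R) * k%:R <= N `^ beta.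
  have -> : N `^ beta = N `^ (beta / 2) * N `^ (beta / 2).
    by rewrite -powRD ?(gt_eqF (lt_le_trans ltr01 N1)) ?implybT // -splitr.
  by apply: ler_pM.
have kkN : (k%:R : R) * k%:R <= N.
  by apply: (le_trans kk); rewrite -{2}(powRr1 N0); apply: pmono.
rewrite -(ler_nat R) !natrM -/N.
rewrite /n_bdry; case: ifP => hg.
- set nb := n_ant gamma n.
  have nbR : (nb%:R : R) <= N `^ gamma by rewrite /nb /n_ant truncn_le powR_ge0.
  apply: (@le_trans _ _ (N `^ beta * N `^ gamma)); first by apply: ler_pM.
  rewrite -powRD ?(gt_eqF (lt_le_trans ltr01 N1)) ?implybT //.
  by rewrite -{2}(powRr1 N0); apply: pmono.
- set s := Num.sqrt (N / (k%:R ^+ 2)).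
  have s0 : 0 <= s by apply: sqrtr_ge0.
  set nb := Num.trunc s.
  have nbR : (nb%:R : R) <= s by rewrite /nb truncn_le.
  have kpos : (0 : R) < k%:R by rewrite ltr0n /k /cells_side leq_max.
  have nb0 : (0 : R) <= nb%:R by [].
  have hs : s * s = N / (k%:R ^+ 2).
    by rewrite -expr2 sqr_sqrtr // divr_ge0 // exprn_ge0.
  have h2 : (k%:R * k%:R) * (nb%:R * nb%:R) <= N.
    apply: (@le_trans _ _ ((k%:R * k%:R) * (s * s))).
      by apply: ler_wpM2l; [apply: mulr_ge0|apply: ler_pM].
    by rewrite hs expr2 mulrC divfK // mulf_neq0 // gt_eqF.
  have hA : 0 <= k%:R * k%:R * nb%:R :> R by rewrite !mulr_ge0.
  have : (k%:R * k%:R * nb%:R) * (k%:R * k%:R * nb%:R) <= N * N :> R.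
    have -> : (k%:R * k%:R * nb%:R) * (k%:R * k%:R * nb%:R) =
      (k%:R * k%:R) * ((k%:R * k%:R) * (nb%:R * nb%:R)) :> R by ring.
    by apply: ler_pM => //; apply: mulr_ge0; apply: mulr_ge0.
  by move=> h; nra.
Qed.

Section Prob.
Variables (R : realType) (d : measure_display) (Om : measurableType d).
Variables (P : probability Om R) (n : nat) (X : 'I_n -> Om -> R * R).
Variables (D : set (R * R)) (c : R).
Hypotheses (hXmeas : forall i, measurable_fun setT (X i))
  (hXind : mutually_independent P X)
  (hXunif : forall i, uniform_on P (X i) D)
  (mD : measurable D) (Dsub : D `<=` box 0 0 1)
  (c0 : 0 < c) (hc : c <= fine (leb2 D)) (Dfin : leb2 D = (fine (leb2 D))%:E).

Lemma PE {A : set Om} : measurable A -> P A = (fine (P A))%:E.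
Proof. by move=> mA; rewrite fineK //; apply: fin_num_measure. Qed.

Lemma fineP_le (A : set Om) (b : R) : measurable A -> (P A <= b%:E)%E -> fine (P A) <= b.
Proof. by move=> mA; rewrite (PE mA) lee_fin. Qed.

Lemma unif_bound i (A : set (R * R)) (s : R) : measurable A -> 0 <= s ->
  leb2 A = s%:E -> fine (P (X i @^-1` A)) <= s / c.
Proof.
move=> mA s0 hA; rewrite hXunif //=.
set m := fine (leb2 D).
have m0 : 0 < m by apply: lt_le_trans hc.
have hAD : (leb2 (A `&` D) <= s%:E)%E.
  by rewrite -hA; apply: le_measure; rewrite ?inE //; apply: measurableI.
have hAD0 := measure_ge0 (@leb2 R) (A `&` D).
have fAD : leb2 (A `&` D) \is a fin_num.
  by rewrite ge0_fin_numE // (le_lt_trans hAD) // ltry.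
have x0 : 0 <= fine (leb2 (A `&` D)) by rewrite -lee_fin fineK.
have xs : fine (leb2 (A `&` D)) <= s by rewrite -lee_fin fineK.
rewrite ler_pdivrMr // mulrAC ler_pdivlMr //.
have : fine (leb2 (A `&` D)) * c <= s * c by rewrite ler_wpM2r // ltW.
move=> h; apply: le_trans h _; rewrite ler_wpM2l //.
Qed.

Lemma measP_pre i {A : set (R * R)} : measurable A -> measurable (X i @^-1` A).
Proof. by move=> mA; apply: mpre. Qed.

Lemma dist_meas (f g : Om -> R * R) r : measurable_fun setT f -> measurable_fun setT g ->
  0 <= r -> measurable [set w | dist2 (f w) (g w) <= r].
Proof.
move=> mf mg r0.
have -> : [set w | dist2 (f w) (g w) <= r] =
   (fun w => sqf (g w) (f w)) @^-1` `]-oo, r ^+ 2].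
  by apply/seteqP; split => w /=; rewrite in_itv /= dist2_le.
apply: mpre; last exact: measurable_itv.
rewrite /sqf; apply: measurable_realfun.measurable_funD.
  apply: measurable_realfun.measurable_funX.
  apply: measurable_realfun.measurable_funB.
    exact: measurableT_comp measurable_fst mf.
  exact: measurableT_comp measurable_fst mg.
apply: measurable_realfun.measurable_funX.
apply: measurable_realfun.measurable_funB.
  exact: measurableT_comp measurable_snd mf.
exact: measurableT_comp measurable_snd mg.
Qed.

Lemma ant_bound i (z : R * R) r : 0 < r ->
  fine (P [set w | dist2 (X i w) z <= r]) <= (r + r) * (r + r) / c.
Proof.
move=> r0.
have mE : measurable [set w | dist2 (X i w) z <= r].
  by apply: (dist_meas (X i) (fun=> z)) => //; exact: ltW.
have mB := box_meas (z.1 - r) (z.2 - r) (r + r).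
have rr : 0 <= r + r by rewrite addr_ge0 // ltW.
have rr2 : 0 <= (r + r) * (r + r) by rewrite mulr_ge0.
apply: (le_trans _ (unif_bound i _ _ mB rr2 (leb2_box _ _ _ rr))).
rewrite -lee_fin -(PE mE) -(PE (measP_pre i mB)).
apply: le_measure; rewrite ?inE //; first exact: measP_pre.
by move=> w /= h; apply: dist2_box.
Qed.


Lemma zero_out i : P (X i @^-1` (~` box 0 0 1)) = 0%E.
Proof.
rewrite hXunif; last by apply: measurableC; exact: box_meas.
have -> : ~` box 0 0 1 `&` D = set0.
  by apply/seteqP; split => p //= [h1 h2]; apply: h1; apply: Dsub.
have -> : leb2 (@set0 (R * R)) = 0%E by apply: measure0.
by rewrite /= mul0r.
Qed.

Lemma indep2 i j (A B : set (R * R)) : i != j -> measurable A -> measurable B ->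
  fine (P (X i @^-1` A `&` X j @^-1` B)) = fine (P (X i @^-1` A)) * fine (P (X j @^-1` B)).
Proof.
move=> ij mA mB.
pose F := fun l : 'I_n => if l == i then A else if l == j then B else setT.
have mF : forall l, measurable (F l).
  by move=> l; rewrite /F; case: ifP => _ //; case: ifP => _ //; exact: measurableT.
have := hXind [set i; j]%SET F mF.
have -> : [set w | forall l, l \in [set i; j]%SET -> F l (X l w)] = X i @^-1` A `&` X j @^-1` B.
  apply/seteqP; split => w /=.
  - move=> h; split.
    + have := h i; rewrite /F !inE. have ii := eqxx i. rewrite /= in ii.
      by rewrite ii /= => /(_ isT).
    + have := h j; rewrite /F !inE. have jj := eqxx j. have ji : (j == i) = false by rewrite eq_sym (negbTE ij).
      by rewrite jj ji orbT /= => /(_ isT).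
  - move=> [hi hj] l; rewrite !inE => /orP[/eqP ->|/eqP ->]; rewrite /F.
      by rewrite (eqxx i).
    have ji : (j == i) = false by rewrite eq_sym (negbTE ij).
    by rewrite ji (eqxx j).
move=> ->; rewrite big_setU1 ?inE //= big_set1 /F.
have ji : (j == i) = false by rewrite eq_sym (negbTE ij).
by rewrite (eqxx i) ji (eqxx j).
Qed.

Lemma ubound_P (I : finType) (F : I -> set Om) (b : R) :
  (forall i, measurable (F i)) -> (forall i, fine (P (F i)) <= b) ->
  fine (P (\big[setU/set0]_(i : I) F i)) <= #|I|%:R * b.
Proof.
move=> mF hF; apply: fineP_le.
  by apply: bigsetU_measurable => i _; exact: mF.
apply: ubound_fin => // i.
have := hF i; rewrite -lee_fin -(PE (mF i)) => h; exact: h.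
Qed.

Lemma pair_bound i j r : i != j -> 0 < r -> r <= 1 ->
  fine (P [set w | dist2 (X i w) (X j w) <= r]) <= 36 * (r * r / (c * c)).
Proof.
move=> ij r0 r1.
have mE : measurable [set w | dist2 (X i w) (X j w) <= r].
  by apply: dist_meas => //; exact: ltW.
set M := (Num.trunc r^-1).+1.
pose Q (uv : 'I_M * 'I_M) := box (uv.1%:R * r) (uv.2%:R * r) r.
pose B (uv : 'I_M * 'I_M) := box (uv.1%:R * r - r) (uv.2%:R * r - r) (r + r + r).
pose G uv := X i @^-1` Q uv `&` X j @^-1` B uv.
have mG : forall uv, measurable (G uv).
  by move=> uv; apply: measurableI; apply: measP_pre; exact: box_meas.
have mC : measurable (X i @^-1` (~` box 0 0 1)).
  by apply: measP_pre; apply: measurableC; exact: box_meas.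
have mU : measurable (\big[setU/set0]_(uv : 'I_M * 'I_M) G uv).
  by apply: bigsetU_measurable => uv _; exact: mG.
have rinv0 : 0 <= r^-1 by rewrite invr_ge0 ltW.
have key : forall x, 0 <= x -> x <= 1 ->
    exists2 u : 'I_M, u%:R * r <= x & x <= u%:R * r + r.
  move=> x x0 x1.
  have xr0 : 0 <= x / r by rewrite divr_ge0 // ltW.
  have ltM : (Num.trunc (x / r) < M)%N.
    by rewrite ltnS; apply: le_truncn; rewrite ler_pdivrMr // mulVf ?gt_eqF.
  exists (Ordinal ltM) => /=; have /andP[t1 t2] := trunc_itv xr0.
  - by move: t1; rewrite ler_pdivlMr.
  - by move: t2; rewrite ltr_pdivrMr // => /ltW; rewrite -natr1 mulrDl mul1r.
have sub : [set w | dist2 (X i w) (X j w) <= r] `<=`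
    X i @^-1` (~` box 0 0 1) `|` \big[setU/set0]_(uv : 'I_M * 'I_M) G uv.
  move=> w /= hd.
  have [hb|hb] := pselect (box 0 0 1 (X i w)); last by left.
  right; apply/bigU_fin.
  move: hb; rewrite /box /= !in_itv /= !add0r => -[/andP[x10 x11] /andP[x20 x21]].
  have h1 := le_trans (abs_le_dist1 (X i w) (X j w)) hd.
  have h2 := le_trans (abs_le_dist2 (X i w) (X j w)) hd.
  move: h1 h2; rewrite !ler_norml => /andP[h1a h1b] /andP[h2a h2b].
  have [u u1 u2] := key _ x10 x11.
  have [v v1 v2] := key _ x20 x21.
  exists (u, v); rewrite /G /Q /B /box /= !in_itv /=.
  by split; split; apply/andP; split; lra.
have hPU : fine (P (\big[setU/set0]_(uv : 'I_M * 'I_M) G uv)) <=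
    #|{: 'I_M * 'I_M}|%:R * (r * r / c * ((r + r + r) * (r + r + r) / c)).
  apply: ubound_P => // uv.
  rewrite /G indep2 //; last 2 first.
  - exact: box_meas.
  - exact: box_meas.
  have rr : 0 <= r by exact: ltW.
  have r3 : 0 <= r + r + r by rewrite !addr_ge0.
  apply: ler_pM.
  - by rewrite -lee_fin -PE ?measure_ge0 //; apply: measP_pre; exact: box_meas.
  - by rewrite -lee_fin -PE ?measure_ge0 //; apply: measP_pre; exact: box_meas.
  - by apply: unif_bound; [exact: box_meas|rewrite mulr_ge0|exact: leb2_box].
  - by apply: unif_bound; [exact: box_meas|rewrite mulr_ge0|exact: leb2_box].
have hPE : (P [set w | (dist2 (X i w) (X j w) <= r)%R] <=
    (#|{: 'I_M * 'I_M}|%:R * (r * r / c * ((r + r + r) * (r + r + r) / c)))%:E)%E.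
  have hs : (P [set w | (dist2 (X i w) (X j w) <= r)%R] <=
     P (X i @^-1` (~` box 0 0 1) `|` \big[setU/set0]_(uv : 'I_M * 'I_M) G uv))%E.
    by apply: le_measure; rewrite ?inE //; exact: measurableU.
  have hu : (P (X i @^-1` (~` box 0 0 1) `|` \big[setU/set0]_(uv : 'I_M * 'I_M) G uv) <=
     P (X i @^-1` (~` box 0 0 1)) + P (\big[setU/set0]_(uv : 'I_M * 'I_M) G uv))%E.
    exact: measureU2.
  rewrite zero_out add0e (PE mU) in hu.
  by apply: (le_trans hs); apply: (le_trans hu); rewrite lee_fin.
apply: (le_trans (fineP_le _ _ mE hPE)).
rewrite card_prod card_ord natrM.
have hM : (M%:R : R) <= r^-1 + 1.
  by rewrite /M -natr1 lerD2r truncn_le.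
set t := M%:R * r.
have t0 : 0 <= t by rewrite mulr_ge0 // ltW.
have t2 : t <= 2.
  have : t <= (r^-1 + 1) * r by rewrite ler_wpM2r // ltW.
  by rewrite mulrDl mulVf ?gt_eqF // mul1r; lra.
have -> : M%:R * M%:R * (r * r / c * ((r + r + r) * (r + r + r) / c)) =
    9 * (t * t) * (r * r / (c * c)).
  by rewrite /t; field; rewrite gt_eqF.
have q0 : 0 <= r * r / (c * c) by rewrite divr_ge0 // mulr_ge0 // ltW.
have tt : 9 * (t * t) <= 36 by nra.
by rewrite ler_wpM2r.
Qed.

Lemma fineU (A B : set Om) : measurable A -> measurable B ->
  fine (P (A `|` B)) <= fine (P A) + fine (P B).
Proof.
move=> mA mB.
have h : (P (A `|` B) <= P A + P B)%E by exact: measureU2.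
by rewrite (PE mA) (PE mB) (PE (measurableU _ _ mA mB)) -EFinD lee_fin in h.
Qed.

Lemma fine_ge0 (A : set Om) : 0 <= fine (P A).
Proof. by apply: fine_ge0; apply: measure_ge0. Qed.

Lemma bad_bound (beta gamma eps0 eps1 : R) (th : nat -> nat -> R) :
  (0 < n)%N -> 0 < eps1 ->
  (cells_side beta n * cells_side beta n * n_bdry beta gamma n <= n)%N ->
  `|1 - fine (P
     [set w | (forall i j : 'I_n, i != j ->
                 1 / (n%:R `^ (1 + eps1)) < dist2 (X i w) (X j w)) /\
              (forall (i : 'I_n) (a b j : nat),
                 (a < cells_side beta n)%N -> (b < cells_side beta n)%N ->
                 (j < n_bdry beta gamma n)%N ->
                 1 / (n%:R `^ (1 + eps1)) <
                   dist2 (X i w) (bdry_antenna beta eps0 (th a b) n a b j gamma))])|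
  <= (36 / (c * c) + 4 / c) / (n%:R `^ eps1 * n%:R `^ eps1).
Proof.
move=> n0 e0 hcount.
set k := cells_side beta n.
set nb := n_bdry beta gamma n.
set N : R := n%:R.
have N1 : 1 <= N by rewrite /N ler1n.
have N0 : 0 < N by apply: lt_le_trans N1.
have Ne1 : 1 <= N `^ eps1 by rewrite -(powRr0 N); apply: ler_powR => //; exact: ltW.
have Ne0 : 0 < N `^ eps1 by apply: lt_le_trans Ne1.
have hN1e : N `^ (1 + eps1) = N * N `^ eps1.
  by rewrite powRD ?(gt_eqF N0) ?implybT // powRr1 // ltW.
set r := 1 / N `^ (1 + eps1).
have r0 : 0 < r by rewrite /r hN1e divr_gt0 // mulr_gt0.
have r1 : r <= 1.
  by rewrite /r hN1e ler_pdivrMr ?mulr_gt0 // mul1r; rewrite -(mulr1 1) ler_pM.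
pose Ep (p : 'I_n * 'I_n) : set Om :=
  if p.1 != p.2 then [set w | dist2 (X p.1 w) (X p.2 w) <= r] else set0.
pose Ea (q : 'I_n * 'I_k * 'I_k * 'I_nb) : set Om :=
  [set w | dist2 (X q.1.1.1 w)
     (bdry_antenna beta eps0 (th q.1.1.2 q.1.2) n q.1.1.2 q.1.2 q.2 gamma) <= r].
have mEp : forall p, measurable (Ep p).
  move=> p; rewrite /Ep; case: ifP => _ //.
  by apply: dist_meas => //; exact: ltW.
have mEa : forall q, measurable (Ea q).
  by move=> q; apply: (dist_meas _ (fun=> _)) => //; exact: ltW.
set Up := \big[setU/set0]_(p : 'I_n * 'I_n) Ep p.
set Ua := \big[setU/set0]_(q : 'I_n * 'I_k * 'I_k * 'I_nb) Ea q.
have mUp : measurable Up by apply: bigsetU_measurable => p _; exact: mEp.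
have mUa : measurable Ua by apply: bigsetU_measurable => q _; exact: mEa.
set G := [set w | _ /\ _].
have HG : G = ~` (Up `|` Ua).
  apply/seteqP; split => w /=.
  - move=> [h1 h2] [/bigU_fin [p hp]|/bigU_fin [q hq]].
    + move: hp; rewrite /Ep; case: ifP => // hne /=.
      by rewrite leNgt (h1 _ _ hne).
    + move: hq; rewrite /Ea /=.
      by rewrite leNgt h2.
  - move=> hn; split.
    + move=> i j hij; rewrite ltNge; apply/negP => hd; apply: hn; left.
      by apply/bigU_fin; exists (i, j); rewrite /Ep /= hij.
    + move=> i a b j ha hb hj; rewrite ltNge; apply/negP => hd; apply: hn; right.
      apply/bigU_fin; exists (i, Ordinal ha, Ordinal hb, Ordinal hj).
      by rewrite /Ea /=.
have mG : measurable G by rewrite HG; apply: measurableC; exact: measurableU.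
have hfG : fine (P G) = 1 - fine (P (Up `|` Ua)).
  have := probability_setC P (measurableU _ _ mUp mUa).
  rewrite -HG (PE (measurableU _ _ mUp mUa)) -EFinB => h.
  by rewrite h.
rewrite hfG opprB addrC subrK ger0_norm ?fine_ge0 //.
apply: (le_trans (fineU _ _ mUp mUa)).
have bp : fine (P Up) <= #|{: 'I_n * 'I_n}|%:R * (36 * (r * r / (c * c))).
  apply: ubound_P => // p; rewrite /Ep; case: ifP => hne.
    exact: pair_bound.
  have -> : P set0 = 0%E by apply: measure0. idtac.
  by rewrite /= mulr_ge0 // divr_ge0 // mulr_ge0 // ltW.
have ba : fine (P Ua) <= #|{: 'I_n * 'I_k * 'I_k * 'I_nb}|%:R * ((r + r) * (r + r) / c).
  by apply: ubound_P => // q; apply: ant_bound.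
apply: (le_trans (lerD bp ba)).
rewrite !card_prod !card_ord.
have hc4 : (n * k * k * nb)%:R <= (n * n)%:R :> R.
  by rewrite ler_nat -!mulnA leq_mul2l !mulnA hcount orbT.
have q1 : 0 <= (r + r) * (r + r) / c by rewrite divr_ge0 ?mulr_ge0 ?addr_ge0 // ltW.
apply: (@le_trans _ _ ((n * n)%:R * (36 * (r * r / (c * c))) + (n * n)%:R * ((r + r) * (r + r) / c))).
  by rewrite lerD2l ler_wpM2r.
have hr : (n * n)%:R * (r * r) = 1 / (N `^ eps1 * N `^ eps1).
  rewrite natrM -/N /r hN1e; field.
  by rewrite !gt_eqF.
have -> : (n * n)%:R * (36 * (r * r / (c * c))) + (n * n)%:R * ((r + r) * (r + r) / c)
   = ((n * n)%:R * (r * r)) * (36 / (c * c) + 4 / c).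
  by field; rewrite gt_eqF.
by rewrite hr mul1r mulrC.
Qed.

End Prob.

Theorem lemma6 (R : realType) (beta gamma eps0 : R)
  (hbeta : 0 <= beta < 1) (hgamma : 0 <= gamma < 1) (hbg : beta + gamma <= 1)
  (heps0 : 0 < eps0 < 2^-1)
  (theta : nat -> nat -> nat -> R)
  (d : measure_display) (Omega : nat -> measurableType d)
  (P : forall n, probability (Omega n) R)
  (X : forall n, 'I_n -> Omega n -> R * R)
  (hXmeas : forall n (i : 'I_n), measurable_fun setT (X n i))
  (hXind : forall n, mutually_independent (P n) (X n))
  (hXunif : forall n (i : 'I_n), uniform_on (P n) (X n i) (node_region beta eps0 n))
  (eps1 : R) (heps1 : 0 < eps1) :
  (fun n : nat => fine (P n
     [set w | (forall i j : 'I_n, i != j ->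
                 1 / (n%:R `^ (1 + eps1)) < dist2 (X n i w) (X n j w)) /\
              (forall (i : 'I_n) (a b j : nat),
                 (a < cells_side beta n)%N -> (b < cells_side beta n)%N ->
                 (j < n_bdry beta gamma n)%N ->
                 1 / (n%:R `^ (1 + eps1)) <
                   dist2 (X n i w) (bdry_antenna beta eps0 (theta n a b) n a b j gamma))]))
  @ \oo --> (1 : R).
Proof.
set c := cD R eps0.
have c0 : 0 < c := @cD_gt0 R eps0 heps0.
set K := 36 / (c * c) + 4 / c.
have K0 : 0 <= K by rewrite addr_ge0 // divr_ge0 // ?mulr_ge0 // ltW.
case/andP: hbeta => b0 b1; case/andP: hgamma => g0 g1.
have hb : forall n, (0 < n)%N -> `|1 - fine (P n
     [set w | (forall i j : 'I_n, i != j ->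
                 1 / (n%:R `^ (1 + eps1)) < dist2 (X n i w) (X n j w)) /\
              (forall (i : 'I_n) (a b j : nat),
                 (a < cells_side beta n)%N -> (b < cells_side beta n)%N ->
                 (j < n_bdry beta gamma n)%N ->
                 1 / (n%:R `^ (1 + eps1)) <
                   dist2 (X n i w) (bdry_antenna beta eps0 (theta n a b) n a b j gamma))])|
    <= K / (n%:R `^ eps1 * n%:R `^ eps1).
  move=> n n0.
  have := (@bad_bound R d (Omega n) (P n) n (X n) (node_region beta eps0 n) c (hXmeas n) (hXind n) (hXunif n) (nr_meas _ _ _ _ heps0)
    (@nr_sub _ _ _ _) c0 (nr_lb _ _ _ _ heps0) beta gamma eps0 eps1 (theta n) n0 heps1).
  apply.
  by apply: count_bound => //; exact: ltW.
apply/cvgrPdist_le => e e0.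
set Y := Num.max 1 (K / e).
have Y1 : 1 <= Y by rewrite le_max lexx.
have Y0 : 0 <= Y by apply: le_trans Y1.
set N0 := (Num.trunc (Y `^ eps1^-1)).+1.
exists N0 => // n /= hn.
have n0 : (0 < n)%N by apply: leq_trans hn.
apply: (le_trans (hb n n0)).
set t := n%:R `^ eps1.
have ht : Y <= t.
  have h1 : Y `^ eps1^-1 <= n%:R.
    have := truncnS_gt (Y `^ eps1^-1) => /ltW h; apply: (le_trans h).
    by rewrite ler_nat.
  have : (Y `^ eps1^-1) `^ eps1 <= t.
    by apply: ge0_ler_powR; rewrite ?nnegrE ?powR_ge0 ?ler0n //; exact: ltW.
  by rewrite -powRrM mulVf ?gt_eqF // powRr1.
have t1 : 1 <= t by apply: le_trans ht.
have hKe : K / e <= t by apply: le_trans ht; rewrite le_max lexx orbT.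
have t0 : 0 < t by apply: lt_le_trans t1.
rewrite ler_pdivrMr ?mulr_gt0 //.
move: hKe; rewrite ler_pdivrMr // => hKe.
nra.
Qed.
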